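(* Let $(W,S)$ be a Coxeter system with $S$ finite. Then $\operatorname{Ad}(Q_W)$ is generated by the elements $e_s$ ($s\in S$).
   Context: A Coxeter system $(W,S)$: $S$ finite, $m:S\times S\to\mathbb{N}\cup\{\infty\}$ with $m(s,s)=1$, $2\le m(s,t)=m(t,s)\le\infty$ for $s\ne t$, $W=\langle s\in S\mid (st)^{m(s,t)}=1\ (m(s,t)<\infty)\rangle$. The Coxeter quandle is $Q_W=\bigcup_{w\in W}w^{-1}Sw$ with operation $x\ast y=yxy$, and $\operatorname{Ad}(Q_W)=\langle e_x\ (x\in Q_W)\mid e_y^{-1}e_xe_y=e_{x\ast y}\ (x,y\in Q_W)\rangle$. *)

(* Defs.v *)
From mathcomp Require Import all_boot.
Set Implicit Arguments. Unset Strict Implicit. Unset Printing Implicit Defensive.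

(* A letter (a, false) stands for the generator a, (a, true) for a^-1. *)
Definition letter (A : Type) := (A * bool)%type.
Definition word (A : Type) := seq (letter A).

Definition inv_word (A : Type) (w : word A) : word A :=
  rev (map (fun p => (p.1, ~~ p.2)) w).

Inductive pres_eq (A : Type) (R : word A -> word A -> Prop) :
    word A -> word A -> Prop :=
| pe_refl w : pres_eq R w w
| pe_sym u v : pres_eq R u v -> pres_eq R v u
| pe_trans u v w : pres_eq R u v -> pres_eq R v w -> pres_eq R u w
| pe_rel u v : R u v -> pres_eq R u v
| pe_free (a : A) (b : bool) : pres_eq R [:: (a, b); (a, ~~ b)] [::]
| pe_cat u u' v v' :
    pres_eq R u u' -> pres_eq R v v' -> pres_eq R (u ++ v) (u' ++ v').

(* Coxeter matrices: m s t = None encodes m(s,t) = infinity. *)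
Definition coxeter_matrix (S : finType) (m : S -> S -> option nat) : Prop :=
  (forall s, m s s = Some 1%N) /\
  (forall s t, m s t = m t s) /\
  (forall s t, s != t ->
     match m s t with Some k => (2 <= k)%N | None => true end).

Definition coxeter_rel (S : finType) (m : S -> S -> option nat)
    (u v : word S) : Prop :=
  exists s t k, m s t = Some k /\
    u = flatten (nseq k [:: (s, false); (t, false)]) /\ v = [::].

Definition cox_eq (S : finType) (m : S -> S -> option nat) :=
  pres_eq (@coxeter_rel S m).

(* u represents an element of Q_W = \bigcup_w w^-1 S w. *)
Definition is_reflection (S : finType) (m : S -> S -> option nat)
    (u : word S) : Prop :=
  exists (w : word S) (s : S), cox_eq m u (inv_word w ++ (s, false) :: w).

(* Generators e_x of Ad(Q_W), indexed by word representatives of x in Q_W. *)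
Definition QW (S : finType) (m : S -> S -> option nat) : Type :=
  {u : word S | is_reflection m u}.

(* Relations of Ad(Q_W):
   - e_x = e_y whenever x and y represent the same element of Q_W;
   - e_y^-1 e_x e_y = e_z whenever z represents x * y = y x y. *)
Definition ad_rel (S : finType) (m : S -> S -> option nat)
    (u v : word (QW m)) : Prop :=
  (exists x y : QW m, cox_eq m (proj1_sig x) (proj1_sig y) /\
     u = [:: (x, false)] /\ v = [:: (y, false)]) \/
  (exists x y z : QW m,
     cox_eq m (proj1_sig z) (proj1_sig y ++ proj1_sig x ++ proj1_sig y) /\
     u = [:: (y, true); (x, false); (y, false)] /\ v = [:: (z, false)]).

Definition ad_eq (S : finType) (m : S -> S -> option nat) :=
  pres_eq (@ad_rel S m).

Lemma gen_is_reflection (S : finType) (m : S -> S -> option nat) (s : S) :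
  is_reflection m [:: (s, false)].
Proof. exists [::], s. exact: pe_refl. Qed.

Definition e_gen (S : finType) (m : S -> S -> option nat) (s : S) : QW m :=
  exist _ [:: (s, false)] (gen_is_reflection m s).

(* Main.v *)
Require Import Defs.
From mathcomp Require Import all_boot.
Set Implicit Arguments. Unset Strict Implicit. Unset Printing Implicit Defensive.

Section P.
Variables (A : Type) (R : word A -> word A -> Prop).

Lemma pe_catl u v w : pres_eq R v w -> pres_eq R (u ++ v) (u ++ w).
Proof. by move=> H; apply: pe_cat => //; apply: pe_refl. Qed.
Lemma pe_catr u v w : pres_eq R v w -> pres_eq R (v ++ u) (w ++ u).
Proof. by move=> H; apply: pe_cat => //; apply: pe_refl. Qed.

Lemma pe_inv_cancel (w : word A) : pres_eq R (w ++ inv_word w) [::].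
Proof.
elim: w => [|[a b] w IH] /=; first exact: pe_refl.
rewrite /inv_word /= rev_cons -cats1 -/(inv_word w).
apply: (pe_trans (v := [:: (a, b)] ++ [:: (a, ~~ b)])).
    have -> : (a, b) :: w ++ inv_word w ++ [:: (a, ~~ b)] =
    [:: (a, b)] ++ (w ++ inv_word w) ++ [:: (a, ~~ b)] by rewrite /= catA.
  apply: pe_catl; rewrite -[X in pres_eq _ _ X]cat0s; exact: pe_catr.
exact: pe_free.
Qed.

Lemma pe_inv_letter (x : A) (W : word A) :
  pres_eq R [:: (x, false)] W -> pres_eq R [:: (x, true)] (inv_word W).
Proof.
move=> H.
apply: (pe_trans (v := [:: (x, true)] ++ (W ++ inv_word W))).
  rewrite -{1}[[:: (x, true)]]cats0; apply: pe_catl; apply: pe_sym; exact: pe_inv_cancel.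
apply: (pe_trans (v := [:: (x, true)] ++ ([:: (x, false)] ++ inv_word W))).
  apply: pe_catl; apply: pe_catr; exact: pe_sym.
rewrite catA; apply: (pe_trans (v := [::] ++ inv_word W)); last exact: pe_refl.
apply: pe_catr; exact: (pe_free R x true).
Qed.
End P.

Section Main.
Variables (S : finType) (m : S -> S -> option nat).
Hypothesis hm : coxeter_matrix m.

Definition mapE (v : word S) : word (QW m) :=
  map (fun p : letter S => (e_gen m p.1, p.2)) v.

Lemma letter_eq (t : S) (c : bool) : cox_eq m [:: (t, c)] [:: (t, false)].
Proof.
case: c; last exact: pe_refl.
have tt1 : cox_eq m [:: (t, false); (t, false)] [::].
  apply: pe_rel; exists t, t, 1%N; split; first by case: hm => ->.
  by split.
apply: (pe_trans (v := [:: (t, true)] ++ [:: (t, false); (t, false)])).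
  rewrite -{1}[[:: (t, true)]]cats0; apply: pe_catl; exact: pe_sym.
apply: (pe_trans (v := [::] ++ [:: (t, false)])); last exact: pe_refl.
change (cox_eq m ([:: (t, true); (t, false)] ++ [:: (t, false)]) ([::] ++ [:: (t, false)])).
apply: pe_catr; exact: (pe_free _ t true).
Qed.

Lemma X_refl (w : word S) (s : S) : is_reflection m (inv_word w ++ (s, false) :: w).
Proof. exists w, s; exact: pe_refl. Qed.

Definition X w s : QW m := exist _ _ (X_refl w s).

Lemma mainX (w : word S) (s : S) :
  exists v, @ad_eq S m [:: (X w s, false)] (mapE v).
Proof.
elim/last_ind: w => [|w [t b] [v IH]].
  exists [:: (s, false)]; apply: pe_rel; left.
  exists (X [::] s), (e_gen m s); split => //; exact: pe_refl.
exists ((t, true) :: v ++ [:: (t, false)]).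
apply: (pe_trans (v := [:: (e_gen m t, true); (X w s, false); (e_gen m t, false)])).
  apply: pe_sym; apply: pe_rel; right.
  exists (X w s), (e_gen m t), (X (rcons w (t, b)) s); split => //=.
  have -> : inv_word (rcons w (t, b)) ++ (s, false) :: rcons w (t, b) =
     [:: (t, ~~ b)] ++ (inv_word w ++ (s, false) :: w) ++ [:: (t, b)].
    by rewrite /inv_word map_rcons rev_rcons /= -cats1 -catA.
  change (cox_eq m ([:: (t, ~~ b)] ++ (inv_word w ++ (s, false) :: w) ++ [:: (t, b)])
     ([:: (t, false)] ++ (inv_word w ++ (s, false) :: w) ++ [:: (t, false)])).
  apply: pe_cat; first exact: letter_eq.
  apply: pe_catl; exact: letter_eq.
rewrite /mapE /= map_cat /=.
rewrite -[(e_gen m t, true) :: _]/([:: (e_gen m t, true)] ++ _).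
rewrite -[(e_gen m t, true) :: _]/([:: (e_gen m t, true)] ++ _).
apply: pe_catl.
rewrite -[(X w s, false) :: _]/([:: (X w s, false)] ++ _).
apply: pe_catr; exact: IH.
Qed.

Lemma main1 (x : QW m) : exists v, @ad_eq S m [:: (x, false)] (mapE v).
Proof.
case: x => u Hu; have [w [s H]] := Hu.
have [v Hv] := mainX w s.
exists v; apply: pe_trans Hv; apply: pe_rel; left.
by exists (exist _ u Hu), (X w s); split.
Qed.

Lemma mapE_inv v : mapE (inv_word v) = inv_word (mapE v).
Proof. by rewrite /mapE /inv_word !map_rev -!map_comp. Qed.

End Main.

Theorem proposition2p3 (S : finType) (m : S -> S -> option nat) :
  coxeter_matrix m ->
  forall u : word (QW m),
    exists v : word S,
      @ad_eq S m u (map (fun p : letter S => (e_gen m p.1, p.2)) v).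
Proof.
move=> hm; elim => [|[x b] u [v IH]]; first by exists [::]; exact: pe_refl.
have [v1 H1] : exists v1, @ad_eq S m [:: (x, b)] (mapE m v1).
  have [v0 H0] := main1 hm x.
  case: b; last by exists v0.
  exists (inv_word v0); rewrite mapE_inv; exact: pe_inv_letter.
exists (v1 ++ v); rewrite map_cat.
rewrite -[(x, b) :: u]/([:: (x, b)] ++ u); exact: pe_cat.
Qed.
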